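(* Define $f:\mathbb{R}^2\to\mathbb{R}$ by $f(\mathbf x)=\sqrt{\log\|\mathbf x\|}$ if $\|\mathbf x\|\ge1$ and $f(\mathbf x)=0$ if $\|\mathbf x\|<1$. Then for all $\mathbf x,\mathbf y\in\mathbb{R}^2$ with $\mathbf x\ne\mathbf 0$, $$f(\mathbf x+\mathbf y)-f(\mathbf x)\le1+\frac{\|\mathbf y\|}{\|\mathbf x\|}.$$ Moreover, for every $\varepsilon\in(0,1)$ there exist constants $r,C>0$ depending on $\varepsilon$ such that for all $\mathbf x$ with $\|\mathbf x\|\ge r$ and all $\mathbf y$ with $\|\mathbf y\|\le\|\mathbf x\|^{1-\varepsilon}$, $$f(\mathbf x+\mathbf y)-f(\mathbf x)\le\frac{1}{2\sqrt{\log\|\mathbf x\|}}\Big(\frac{\mathbf x\cdot\mathbf y}{\|\mathbf x\|^2}+\frac{\|\mathbf y\|^2}{2\|\mathbf x\|^2}-\frac{(\mathbf x\cdot\mathbf y)^2}{\|\mathbf x\|^4}+\frac{C\|\mathbf y\|^2}{\|\mathbf x\|^{2+\varepsilon}}\Big)-\frac{1}{8\log^{3/2}\|\mathbf x\|}\frac{(\mathbf x\cdot\mathbf y)^2}{\|\mathbf x\|^4}+\frac{C\|\mathbf y\|^2}{\|\mathbf x\|^{2+\varepsilon}\log^{3/2}\|\mathbf x\|}.$$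
   Context: $\|\cdot\|$ is the Euclidean norm and $\mathbf x\cdot\mathbf y$ the standard scalar product. *)

(* Defs.v *)
From Stdlib Require Import Reals Lra.
Open Scope R_scope.

Definition vadd (x y : R * R) : R * R := (fst x + fst y, snd x + snd y).
Definition dot (x y : R * R) : R := fst x * fst y + snd x * snd y.
Definition norm (x : R * R) : R := sqrt (dot x x).

Definition flog (x : R * R) : R :=
  if Rle_dec 1 (norm x) then sqrt (ln (norm x)) else 0.

(* Main.v *)
Require Import Defs.
From Stdlib Require Import Reals Lra Psatz.
From Coquelicot Require Import Coquelicot.
Import Defs.
Open Scope R_scope.

Lemma ln_cubic_der c : -1 < c ->
  derivable_pt_lim (fun v => v - v^2/2 + v^3/3 - ln (1 + v)) c (c^3/(1+c)).
Proof.
  intros Hc. apply is_derive_Reals. auto_derive. lra.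
  assert (1 + c <> 0) by lra. field. auto.
Qed.

Lemma ln_cubic (u : R) : -1 < u -> ln (1 + u) <= u - u^2/2 + u^3/3.
Proof.
  intros Hu.
  set (h := fun v => v - v^2/2 + v^3/3 - ln (1 + v)).
  assert (D : forall c, -1 < c -> derivable_pt_lim h c (c^3/(1+c))).
  { intros c Hc. apply ln_cubic_der; auto. }
  assert (h0 : h 0 = 0). { unfold h; cbv beta. rewrite Rplus_0_r, ln_1. unfold Rdiv, Rminus; rewrite !pow_i by lia; rewrite !Rmult_0_l, Ropp_0, !Rplus_0_r; reflexivity. }
  assert (h u >= 0).
  { destruct (Rtotal_order u 0) as [Hl|[He|Hg]].
    - destruct (MVT_cor2 h (fun c => c^3/(1+c)) u 0 Hl) as [c [Hc1 Hc2]].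
      { intros c Hc; apply D; lra. }
      rewrite h0 in Hc1.
      assert (c^3/(1+c) <= 0).
      { unfold Rdiv. apply Rmult_le_0_r. assert (c^3 = c*c*c) by ring. nra.
        left; apply Rinv_0_lt_compat; lra. }
      nra.
    - subst; lra.
    - destruct (MVT_cor2 h (fun c => c^3/(1+c)) 0 u Hg) as [c [Hc1 Hc2]].
      { intros c Hc; apply D; lra. }
      rewrite h0 in Hc1.
      assert (0 <= c^3/(1+c)).
      { unfold Rdiv. apply Rmult_le_pos. assert (c^3 = c*c*c) by ring. nra.
        left; apply Rinv_0_lt_compat; lra. }
      nra. }
  unfold h in H. lra.
Qed.

Lemma ln_le_x (x : R) : -1 < x -> ln (1 + x) <= x.
Proof.
  intros Hx. destruct (Req_dec x 0) as [->|Hn].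
  - rewrite Rplus_0_r, ln_1; lra.
  - rewrite <- (ln_exp x) at 2. apply ln_le. lra. left; apply exp_ineq1; auto.
Qed.

Lemma sqrt_taylor (L d : R) : 0 < L -> 0 <= L + d ->
  sqrt (L + d) <= sqrt L + d / (2 * sqrt L) - d^2 / (8 * (L * sqrt L))
     + d^3 / (16 * (L * L * sqrt L)).
Proof.
  intros HL Hd.
  set (q := sqrt L). set (w := sqrt (L + d)).
  assert (Hq : 0 < q) by (apply sqrt_lt_R0; auto).
  assert (Hq2 : q * q = L) by (apply sqrt_sqrt; lra).
  assert (Hw : 0 <= w) by apply sqrt_pos.
  assert (Hw2 : w * w = L + d) by (apply sqrt_sqrt; lra).
  replace d with (w*w - q*q) by lra. rewrite <- Hq2.
  apply Rminus_le_0.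
  replace (q + (w * w - q * q) / (2 * q) - (w * w - q * q) ^ 2 / (8 * (q * q * q)) +
    (w * w - q * q) ^ 3 / (16 * (q * q * (q * q) * q)) - w)
   with ((w - q)^4 * (w*w + 4*w*q + 5*q*q) / (16 * q^5)) by (field; lra).
  apply Rmult_le_pos; [|left; apply Rinv_0_lt_compat; apply Rmult_lt_0_compat; [lra| apply pow_lt; lra]].
  apply Rmult_le_pos. replace ((w-q)^4) with (((w-q)^2)^2) by ring. apply pow2_ge_0. nra.
Qed.

Lemma u_bounds a t : 0 <= t <= 1/16 -> -t <= a <= t ->
  -3*t <= 2*a + t^2 <= 3*t.
Proof. intros. nra. Qed.

Lemma cube_le u t : 0 <= t -> -3*t <= u <= 3*t -> u^3 <= 27 * t^3 /\ -27*t^3 <= u^3.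
Proof.
  intros Ht Hu. assert (u^3 = u*u*u) by ring. assert (t^3 = t*t*t) by ring.
  assert (u*u <= 9*t*t) by nra. split; nra.
Qed.

Lemma D_bounds a t : 0 <= t <= 1/16 -> -t <= a <= t ->
  let u := 2*a + t^2 in let D := u/2 - u^2/4 + u^3/6 in
  D - (a + t^2/2 - a^2) <= 6 * t^3 /\ -4*t^2 <= D - a <= 4*t^2.
Proof.
  intros Ht Ha u D.
  pose proof (u_bounds a t Ht Ha) as Hu. fold u in Hu.
  destruct (cube_le u t ltac:(lra) Hu) as [C1 C2].
  assert (E1 : D - (a + t^2/2 - a^2) = - a * t^2 - t^4/4 + u^3/6) by (unfold D, u; field).
  assert (E2 : D - a = t^2/2 - u^2/4 + u^3/6) by (unfold D, u; field).
  assert (T3 : t^3 <= t^2/16) by nra.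
  assert (U2 : u^2 <= 9*t^2) by nra.
  assert (t^4 >= 0) by (replace (t^4) with ((t^2)^2) by ring; nra).
  assert (- a * t^2 <= t^3) by nra.
  split. rewrite E1. nra.
  rewrite E2. assert (0 <= u^2) by nra. split; nra.
Qed.

Lemma poly_main q a t K D C : 1 <= q -> 0 <= t <= 1/16 -> -t <= a <= t ->
  t^3 <= K -> C = 100 ->
  D - (a + t^2/2 - a^2) <= 6 * t^3 -> -4*t^2 <= D - a <= 4*t^2 ->
  0 <= 8*q^4*(a+t^2/2-a^2+C*K - D) + 2*q^2*(D^2 - a^2) + 16*C*q^2*K - D^3.
Proof.
  intros Hq Ht Ha HK HC B1 B2. subst C.
  assert (T3 : 0 <= t^3) by (apply pow_le; lra).
  assert (X1 : 0 <= 8*q^4*(a+t^2/2-a^2+100*K - D)).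
  { apply Rmult_le_pos. assert (0 <= q^4) by (apply pow_le; lra). lra. lra. }
  assert (Q2 : 1 <= q^2) by nra.
  assert (DA : -12*t^3 <= D^2 - a^2).
  { replace (D^2 - a^2) with ((D-a)*(D+a)) by ring.
    assert (-3*t <= D + a <= 3*t) by nra.
    assert (t^3 = t^2*t) by ring. assert (0 <= t^2) by nra. nra. }
  assert (D3 : D^3 <= 8*t^3).
  { assert (-2*t <= D <= 2*t) by nra. assert (D*D <= 4*t*t) by nra.
    assert (t^3 = t*t*t) by ring. assert (D^3 = D*D*D) by ring.
    destruct (Rle_dec 0 D); nra. }
  assert (X2 : 2*q^2*(-12*t^3) <= 2*q^2*(D^2-a^2)) by (apply Rmult_le_compat_l; nra).
  assert (X3 : 1600*q^2*t^3 <= 16*100*q^2*K) by nra.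
  nra.
Qed.

Lemma final_ineq L a t E D0 : 1 <= L -> 0 <= t <= 1/16 -> -t <= a <= t -> t*E <= 1 -> 0 < E ->
  D0 <= (2*a+t^2)/2 - (2*a+t^2)^2/4 + (2*a+t^2)^3/6 -> 0 <= L + D0 ->
  sqrt (L + D0) - sqrt L <= 1/(2*sqrt L)*(a + t^2/2 - a^2 + 100 * t^2/E)
     - 1/(8*(L*sqrt L))*a^2 + 100*t^2/(E*(L*sqrt L)).
Proof.
  intros HL Ht Ha HtE HE HD0 HLD.
  set (D := (2*a+t^2)/2 - (2*a+t^2)^2/4 + (2*a+t^2)^3/6) in *.
  destruct (D_bounds a t Ht Ha) as [B1 B2]. fold D in B1, B2.
  assert (S1 : sqrt (L + D0) <= sqrt (L + D)) by (apply sqrt_le_1_alt; lra).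
  pose proof (sqrt_taylor L D ltac:(lra) ltac:(lra)) as S2.
  set (q := sqrt L) in *.
  assert (Hq : 1 <= q) by (rewrite <- sqrt_1; apply sqrt_le_1_alt; lra).
  assert (Hq2 : q * q = L) by (apply sqrt_sqrt; lra).
  assert (K3 : t^3 <= t^2/E).
  { assert (t <= /E) by (apply (Rmult_le_reg_r E); [lra|]; rewrite Rinv_l; lra).
    unfold Rdiv. replace (t^3) with (t^2*t) by ring. apply Rmult_le_compat_l; nra. }
  pose proof (poly_main q a t (t^2/E) D 100 Hq Ht Ha K3 eq_refl B1 B2) as P.
  rewrite <- Hq2 in *.
  assert (Eq : 1/(2*q)*(a + t^2/2 - a^2 + 100 * t^2/E)
     - 1/(8*(q*q*q))*a^2 + 100*t^2/(E*(q*q*q)) -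
     (q + D / (2 * q) - D^2 / (8 * (q*q * q)) + D^3 / (16 * (q*q * (q*q) * q)) - q)
     = (8*q^4*(a+t^2/2-a^2+100*(t^2/E) - D) + 2*q^2*(D^2 - a^2) + 16*100*q^2*(t^2/E) - D^3) / (16*q^5)).
  { field. lra. }
  assert (0 <= (8*q^4*(a+t^2/2-a^2+100*(t^2/E) - D) + 2*q^2*(D^2 - a^2) + 16*100*q^2*(t^2/E) - D^3) / (16*q^5)).
  { apply Rmult_le_pos; [lra|]. left; apply Rinv_0_lt_compat. assert (0 < q^5) by (apply pow_lt; lra). lra. }
  lra.
Qed.

Lemma ln_le' x y : 0 < x -> x <= y -> ln x <= ln y.
Proof. intros. destruct H0. left; apply ln_increasing; auto. subst; lra. Qed.

Lemma dot_nonneg x : 0 <= dot x x.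
Proof. destruct x; unfold dot; simpl; nra. Qed.

Lemma norm_nonneg x : 0 <= norm x.
Proof. apply sqrt_pos. Qed.

Lemma norm_sq x : norm x * norm x = dot x x.
Proof. apply sqrt_sqrt, dot_nonneg. Qed.

Lemma norm_pos x : x <> (0,0) -> 0 < norm x.
Proof.
  intros H. destruct x as [x1 x2]. apply sqrt_lt_R0. unfold dot; simpl.
  destruct (Req_dec x1 0); destruct (Req_dec x2 0); subst; try (exfalso; apply H; reflexivity); nra.
Qed.

Lemma cs x y : Rabs (dot x y) <= norm x * norm y.
Proof.
  pose proof (norm_sq x). pose proof (norm_sq y). pose proof (norm_nonneg x). pose proof (norm_nonneg y).
  assert (dot x y ^2 <= dot x x * dot y y).
  { destruct x as [x1 x2], y as [y1 y2]; unfold dot; simpl. pose proof (pow2_ge_0 (x1*y2 - x2*y1)). nra. }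
  apply Rabs_le. assert (N2 : (norm x * norm y)^2 = dot x x * dot y y) by (rewrite <- H, <- H0; ring). assert (0 <= norm x * norm y) by nra. split; nra.
Qed.

Lemma dot_add x y : dot (vadd x y) (vadd x y) = dot x x + 2 * dot x y + dot y y.
Proof. destruct x, y; unfold dot, vadd; simpl; ring. Qed.

Lemma norm_tri x y : norm (vadd x y) <= norm x + norm y.
Proof.
  pose proof (cs x y) as C. assert (C' := Rle_trans _ _ _ (Rle_abs (dot x y)) C). assert (C'' := Rle_trans _ _ _ (Rle_abs (- dot x y)) (eq_ind_r (fun z => z <= _) C (Rabs_Ropp _))).
  pose proof (norm_sq x). pose proof (norm_sq y). pose proof (norm_sq (vadd x y)).
  pose proof (norm_nonneg x). pose proof (norm_nonneg y). pose proof (norm_nonneg (vadd x y)).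
  rewrite dot_add in H1. assert (0 <= norm x * norm y) by nra. nra.
Qed.

Lemma sqrt_split A w B : 0 <= A -> 0 <= w -> B <= A + w -> sqrt B <= sqrt A + 1 + w.
Proof.
  intros HA Hw HB.
  assert (sqrt B <= sqrt (A + w)) by (apply sqrt_le_1_alt; lra).
  assert (sqrt (A + w) <= sqrt A + sqrt w).
  { rewrite <- (sqrt_pow2 (sqrt A + sqrt w)) by (pose proof (sqrt_pos A); pose proof (sqrt_pos w); lra).
    apply sqrt_le_1_alt. pose proof (sqrt_sqrt A HA). pose proof (sqrt_sqrt w Hw).
    pose proof (sqrt_pos A); pose proof (sqrt_pos w). nra. }
  assert (sqrt w <= 1 + w). { pose proof (sqrt_sqrt w Hw). pose proof (sqrt_pos w). nra. }
  lra.
Qed.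

Lemma part1 : forall x y : R * R, x <> (0, 0) ->
     flog (vadd x y) - flog x <= 1 + norm y / norm x.
Proof.
  intros x y Hx. pose proof (norm_pos x Hx) as Hs. pose proof (norm_nonneg y) as Hm.
  pose proof (norm_tri x y) as Ht.
  set (s := norm x) in *. set (m := norm y) in *. set (n := norm (vadd x y)) in *.
  assert (Hw : 0 <= m / s) by (unfold Rdiv; apply Rmult_le_pos; [lra|left; apply Rinv_0_lt_compat; lra]).
  unfold flog. fold s n.
  assert (F0 : 0 <= (if Rle_dec 1 s then sqrt (ln s) else 0)) by (destruct Rle_dec; [apply sqrt_pos|lra]).
  destruct (Rle_dec 1 n) as [Hn|Hn]; [|lra].
  assert (Lns : ln n <= ln (s + m)) by (apply ln_le'; lra).
  assert (Esm : s + m = s * (1 + m/s)) by (field; lra).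
  assert (Hl1 : ln (1 + m/s) <= m/s) by (apply ln_le_x; lra).
  destruct (Rle_dec 1 s) as [H1s|H1s].
  - rewrite Esm, ln_mult in Lns by lra.
    assert (0 <= ln s) by (rewrite <- ln_1; apply ln_le'; lra).
    pose proof (sqrt_split (ln s) (m/s) (ln n) H Hw ltac:(lra)). lra.
  - assert (s + m <= 1 + m/s).
    { assert (m <= m/s). { unfold Rdiv. rewrite <- (Rmult_1_r m) at 1. apply Rmult_le_compat_l; [lra|].
        rewrite <- Rinv_1. apply Rinv_le_contravar; lra. } lra. }
    assert (ln (s+m) <= ln (1 + m/s)) by (apply ln_le'; lra).
    pose proof (sqrt_split 0 (m/s) (ln n) ltac:(lra) Hw ltac:(lra)). rewrite sqrt_0 in H1. lra.
Qed.

Lemma exp_le' x y : x <= y -> exp x <= exp y.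
Proof. intros [H|H]. left; apply exp_increasing; auto. subst; lra. Qed.

Lemma part2 : forall eps : R, 0 < eps < 1 ->
     exists r C : R, 0 < r /\ 0 < C /\
       forall x y : R * R,
         r <= norm x ->
         norm y <= Rpower (norm x) (1 - eps) ->
         flog (vadd x y) - flog x <=
           1 / (2 * sqrt (ln (norm x))) *
             (dot x y / norm x ^ 2
              + norm y ^ 2 / (2 * norm x ^ 2)
              - (dot x y) ^ 2 / norm x ^ 4
              + C * norm y ^ 2 / Rpower (norm x) (2 + eps))
           - 1 / (8 * Rpower (ln (norm x)) (3 / 2)) * ((dot x y) ^ 2 / norm x ^ 4)
           + C * norm y ^ 2 / (Rpower (norm x) (2 + eps) * Rpower (ln (norm x)) (3 / 2)).
Proof.
  intros eps [He0 He1]. exists (exp (4/eps)), 100. split; [apply exp_pos|]. split; [lra|].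
  intros x y Hr Hm.
  pose proof (cs x y) as CS. pose proof (norm_nonneg y) as Hm0.
  pose proof (norm_sq x) as NX. pose proof (norm_sq y) as NY. pose proof (norm_sq (vadd x y)) as NXY.
  pose proof (norm_nonneg (vadd x y)) as Hn0.
  rewrite dot_add in NXY.
  set (s := norm x) in *. set (m := norm y) in *. set (n := norm (vadd x y)) in *.
  assert (E4 : 16 < exp 4).
  { replace 4 with (1+1+1+1) by ring. rewrite !exp_plus. pose proof (exp_ineq1 1 ltac:(lra)). assert (4 < exp 1 * exp 1) by nra. assert (0 < exp 1 * exp 1 * exp 1) by nra. nra. }
  assert (H4e : 4 <= 4/eps).
  { unfold Rdiv. assert (1 <= /eps) by (rewrite <- Rinv_1; apply Rinv_le_contravar; lra). lra. }
  assert (Hs16 : 16 < s). pose proof (exp_le' _ _ H4e). lra.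
  assert (Hs : 0 < s) by lra.
  assert (HL : 4/eps <= ln s) by (rewrite <- (ln_exp (4/eps)); apply ln_le'; [apply exp_pos|lra]).
  set (L := ln s) in *.
  set (E := Rpower s eps).
  assert (HE : 16 < E).
  { unfold E, Rpower. fold L. assert (4 <= eps * L).
    { replace 4 with (eps * (4/eps)) by (field; lra). apply Rmult_le_compat_l; lra. }
    pose proof (exp_le' _ _ H). lra. }
  assert (R1 : Rpower s (1 - eps) = s * / E).
  { replace (1 - eps) with (1 + - eps) by ring. rewrite Rpower_plus, Rpower_1, Rpower_Ropp by lra. reflexivity. }
  assert (R2 : Rpower s (2 + eps) = s^2 * E).
  { rewrite Rpower_plus. f_equal. rewrite <- (Rpower_pow 2 s) by lra. try f_equal; try (simpl; ring). }
  assert (R3 : Rpower L (3/2) = L * sqrt L).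
  { replace (3/2) with (1 + /2) by field. rewrite Rpower_plus, Rpower_1, Rpower_sqrt by lra. reflexivity. }
  rewrite R1 in Hm. rewrite R2, R3.
  set (t := m / s). set (a := dot x y / s^2).
  assert (Hdot : dot x y = a * s^2) by (unfold a; field; lra).
  assert (Hmt : m = t * s) by (unfold t; field; lra).
  assert (Ht0 : 0 <= t) by (unfold t, Rdiv; apply Rmult_le_pos; [lra|left; apply Rinv_0_lt_compat; lra]).
  assert (HtE : t * E <= 1).
  { rewrite Hmt in Hm. assert (t <= /E) by (apply (Rmult_le_reg_r s); [lra|]; lra).
    apply (Rmult_le_compat_r E) in H; [|lra]. rewrite Rinv_l in H; lra. }
  assert (Ht : 0 <= t <= 1/16) by nra.
  assert (Ha : -t <= a <= t).
  { rewrite Hdot, Hmt in CS. rewrite Rabs_mult in CS. rewrite (Rabs_right (s^2)) in CS by nra.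
    assert (Rabs a * s^2 <= t * s^2) by (replace (t*s^2) with (s*(t*s)) by ring; exact CS).
    apply Rmult_le_reg_r in H; [|nra]. split; [pose proof (Rle_abs (-a)); rewrite Rabs_Ropp in H0; lra | pose proof (Rle_abs a); lra]. }
  set (u := 2*a + t^2).
  assert (Hu : (1-t)^2 <= 1 + u) by (unfold u; nra).
  assert (Hnn : n * n = s * s * (1 + u)) by (rewrite NXY, <- NX, <- NY, Hdot, Hmt; unfold u; ring).
  assert (Hn1 : 1 <= n).
  { assert (1 <= n * n). { rewrite Hnn. assert (1 <= s*s) by nra. assert (1/2 <= 1+u) by nra. nra. } nra. }
  assert (Hln : ln n = L + /2 * ln (1 + u)).
  { assert (ln (n*n) = ln (s*s*(1+u))) by (rewrite Hnn; reflexivity).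
    rewrite ln_mult, ln_mult, ln_mult in H by nra. fold L in H. lra. }
  unfold flog. fold s n. fold L.
  destruct (Rle_dec 1 n) as [_|C1]; [|lra].
  destruct (Rle_dec 1 s) as [_|C2]; [|lra].
  assert (HL1 : 1 <= L) by lra.
  pose proof (ln_cubic u ltac:(nra)) as LC.
  assert (HD0 : /2 * ln (1+u) <= (2*a+t^2)/2 - (2*a+t^2)^2/4 + (2*a+t^2)^3/6) by (fold u; lra).
  assert (HLD : 0 <= L + /2 * ln (1+u)).
  { rewrite <- Hln. rewrite <- ln_1. apply ln_le'; lra. }
  pose proof (final_ineq L a t E _ HL1 Ht Ha HtE ltac:(lra) HD0 HLD) as F.
  rewrite <- Hln in F.
  assert (Hq : 0 < sqrt L) by (apply sqrt_lt_R0; lra).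
  apply Rle_trans with (1 := F). right. unfold a, t. field. repeat split; lra.
Qed.

Theorem lemma2p2 :
  (forall x y : R * R, x <> (0, 0) ->
     flog (vadd x y) - flog x <= 1 + norm y / norm x)
  /\
  (forall eps : R, 0 < eps < 1 ->
     exists r C : R, 0 < r /\ 0 < C /\
       forall x y : R * R,
         r <= norm x ->
         norm y <= Rpower (norm x) (1 - eps) ->
         flog (vadd x y) - flog x <=
           1 / (2 * sqrt (ln (norm x))) *
             (dot x y / norm x ^ 2
              + norm y ^ 2 / (2 * norm x ^ 2)
              - (dot x y) ^ 2 / norm x ^ 4
              + C * norm y ^ 2 / Rpower (norm x) (2 + eps))
           - 1 / (8 * Rpower (ln (norm x)) (3 / 2)) * ((dot x y) ^ 2 / norm x ^ 4)
           + C * norm y ^ 2 / (Rpower (norm x) (2 + eps) * Rpower (ln (norm x)) (3 / 2))).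
Proof. split; [exact part1 | exact part2]. Qed.
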